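(* Let $\alpha$ be a reduced operation sequence. If a push operation of $\alpha$ is fixed, then every pop operation of $\alpha$ corresponding to it is also fixed.
   Context: Operation sequences: $\sigma[a]$ ($a\ge1$) denotes pushing the top $a$ elements of the input stack, as a block with relative order unchanged, onto the top of a working stack; $\tau[b]$ ($b\ge1$) denotes moving the top $b$ elements of the working stack, as a block with relative order unchanged, onto the top of an output stack; $\sigma=\sigma[1]$, $\tau=\tau[1]$. A well-formed operation sequence is a word $\alpha=\alpha_1\cdots\alpha_m$ in these symbols such that in every prefix the total push size is at least the total pop size, with equality for the whole word; its size $n$ is the total push size. Acting on an input stack containing $1,\dots,n$ with $1$ on top, it produces the permutation read from the final output stack top to bottom. Two well-formed sequences are equivalent if they have the same size and produce the same permutation. $\alpha$ is reduced if every consecutive pair $\alpha_i\alpha_{i+1}$ with $\alpha_i$ a push and $\alpha_{i+1}$ a pop equals $\sigma[1]\tau[1]$. The vertices of $\alpha$ are $v_0=(0,0)$ and $v_i=v_{i-1}+(a,a)$ if $\alpha_i=\sigma[a]$, $v_i=v_{i-1}+(b,-b)$ if $\alpha_i=\tau[b]$. The support of a push (resp. pop) is the set of elements it places on (resp. removes from) the working stack when $\alpha$ acts on input $1,\dots,n$. A push and a pop correspond if their supports intersect. An operation $\alpha_i$ of a reduced sequence $\alpha$ is fixed if for every reduced sequence $\beta=\beta_1\cdots\beta_{m'}$ equivalent to $\alpha$, with vertices $w_0,\dots,w_{m'}$, there is $j$ with $w_{j-1}=v_{i-1}$ and $w_j=v_i$. *)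

(* Defs.v *)
From mathcomp Require Import all_boot all_order all_algebra.
Set Implicit Arguments. Unset Strict Implicit. Unset Printing Implicit Defensive.
Import GRing.Theory Num.Theory.

(* Push a = sigma[a], Pop b = tau[b]. *)
Inductive op := Push of nat | Pop of nat.

Definition is_push (o : op) : bool := if o is Push _ then true else false.
Definition is_pop (o : op) : bool := if o is Pop _ then true else false.
Definition push_size (o : op) : nat := if o is Push a then a else 0.
Definition pop_size (o : op) : nat := if o is Pop b then b else 0.
Definition op_size (o : op) : nat := match o with Push a => a | Pop b => b end.

Definition total_push (s : seq op) : nat := sumn (map push_size s).
Definition total_pop (s : seq op) : nat := sumn (map pop_size s).

Definition op_seq_size (s : seq op) : nat := total_push s.

Definition well_formed (s : seq op) : Prop :=
  (forall i, i < size s -> 1 <= op_size (nth (Push 0) s i)) /\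
  (forall k, k <= size s -> total_pop (take k s) <= total_push (take k s)) /\
  total_pop s = total_push s.

(* State: (input stack, working stack, output stack), each listed top first. *)
Definition state := (seq nat * seq nat * seq nat)%type.

Definition step (st : state) (o : op) : state :=
  let: (inp, work, out) := st in
  match o with
  | Push a => (drop a inp, take a inp ++ work, out)
  | Pop b => (inp, drop b work, take b work ++ out)
  end.

Definition init_state (s : seq op) : state := (iota 1 (op_seq_size s), [::], [::]).

(* states.[i] = state before the i-th operation (0-based); last = final state *)
Definition states (s : seq op) : seq state := init_state s :: scanl step (init_state s) s.

Definition final_state (s : seq op) : state := foldl step (init_state s) s.

(* permutation produced: output stack read top to bottom *)
Definition produced (s : seq op) : seq nat := (final_state s).2.

Definition equivalent (s t : seq op) : Prop :=
  well_formed s /\ well_formed t /\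
  op_seq_size s = op_seq_size t /\ produced s = produced t.

Definition reduced (s : seq op) : Prop :=
  forall i, i.+1 < size s ->
    is_push (nth (Push 0) s i) -> is_pop (nth (Push 0) s i.+1) ->
    nth (Push 0) s i = Push 1 /\ nth (Push 0) s i.+1 = Pop 1.

Definition vstep (v : int * int) (o : op) : int * int :=
  match o with
  | Push a => (v.1 + a%:Z, v.2 + a%:Z)
  | Pop b => (v.1 + b%:Z, v.2 - b%:Z)
  end%R.

Definition vertices (s : seq op) : seq (int * int) :=
  (0%R, 0%R) :: scanl vstep (0%R, 0%R) s.

Definition edge (s : seq op) (i : nat) : (int * int) * (int * int) :=
  (nth (0%R, 0%R) (vertices s) i, nth (0%R, 0%R) (vertices s) i.+1).

Definition support (s : seq op) (i : nat) : seq nat :=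
  let: (inp, work, _) := nth (init_state s) (states s) i in
  match nth (Push 0) s i with
  | Push a => take a inp
  | Pop b => take b work
  end.

Definition correspond (s : seq op) (i k : nat) : Prop :=
  exists x, x \in support s i /\ x \in support s k.

Definition fixed (s : seq op) (i : nat) : Prop :=
  forall t : seq op, reduced t -> equivalent s t ->
    exists j, j < size t /\ edge t j = edge s i.

(* Main.v *)
Require Import Defs.
From mathcomp Require Import all_boot all_order all_algebra zify.
Set Implicit Arguments. Unset Strict Implicit. Unset Printing Implicit Defensive.

Section Run.
Variable s : seq op.

Notation o t := (nth (Push 0) s t).
Definition pu t := total_push (take t s).
Definition po t := total_pop (take t s).
Definition st t := foldl step (init_state s) (take t s).
Definition inp t := (st t).1.1.
Definition wk t := (st t).1.2.
Definition out t := (st t).2.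
Definition N := op_seq_size s.
Definition rho := out (size s).

Lemma take_S t : take t.+1 s = take t s ++ (if t < size s then [:: o t] else [::]).
Proof.
case: ltnP => h; first by rewrite (take_nth (Push 0) h) cats1.
by rewrite !take_oversize ?cats0 // (leq_trans h).
Qed.

Lemma pu_S t : pu t.+1 = pu t + push_size (o t).
Proof.
rewrite /pu take_S /total_push map_cat sumn_cat; case: ltnP => h /=.
  by rewrite addn0.
by rewrite nth_default.
Qed.

Lemma po_S t : po t.+1 = po t + pop_size (o t).
Proof.
rewrite /po take_S /total_pop map_cat sumn_cat; case: ltnP => h /=.
  by rewrite addn0.
by rewrite nth_default.
Qed.

Lemma st_S t : st t.+1 = step (st t) (o t).
Proof.
rewrite /st take_S; case: ltnP => h.
  by rewrite foldl_cat.
rewrite cats0 nth_default //; case: (foldl _ _ _) => [[a b] c] /=.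
by rewrite drop0 take0.
Qed.

Lemma pu0 : pu 0 = 0. Proof. by rewrite /pu take0. Qed.
Lemma po0 : po 0 = 0. Proof. by rewrite /po take0. Qed.

Lemma pu_mono t1 t2 : t1 <= t2 -> pu t1 <= pu t2.
Proof.
elim: t2 => [|t2 IH]; first by rewrite leqn0 => /eqP->.
rewrite leq_eqVlt => /orP[/eqP->//|h].
by rewrite pu_S (leq_trans (IH h)) ?leq_addr.
Qed.

Lemma pu_size t : size s <= t -> pu t = total_push s.
Proof. by move=> h; rewrite /pu take_oversize. Qed.
Lemma po_size t : size s <= t -> po t = total_pop s.
Proof. by move=> h; rewrite /po take_oversize. Qed.

Lemma pu_leN t : pu t <= N.
Proof.
rewrite /N /op_seq_size /pu -{2}(cat_take_drop t s) /total_push map_cat sumn_cat.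
exact: leq_addr.
Qed.

Hypothesis wf : well_formed s.

Lemma po_le_pu t : po t <= pu t.
Proof.
case: (leqP t (size s)) => h.
  by case: wf => _ [H _]; exact: H.
rewrite po_size ?pu_size; try by apply: ltnW.
by case: wf => _ [_ ->].
Qed.

Lemma take_drop_iota p a : p + a <= N -> take a (drop p (iota 1 N)) = iota p.+1 a.
Proof.
move=> h; rewrite drop_iota take_iota add1n; congr iota.
apply/minn_idPl; lia.
Qed.

Lemma run_inv t : [/\ inp t = drop (pu t) (iota 1 N),
  perm_eq (wk t ++ out t) (iota 1 (pu t)) & size (out t) = po t].
Proof.
elim: t => [|t [Hi Hp Hs]].
  by rewrite /inp /wk /out /st take0 pu0 po0 /= drop0.
have Hle := po_le_pu t.+1. have HN := pu_leN t.+1.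
move: Hle HN; rewrite /inp /wk /out st_S pu_S po_S.
move: Hi Hp Hs; rewrite /inp /wk /out.
case: (st t) => [[I W] O] /= -> Hp Hs.
case: (o t) => [a|b] /=; rewrite ?addn0 => Hle HN.
  split => //; first by rewrite drop_drop addnC.
  rewrite take_drop_iota // iotaD add1n -catA perm_sym perm_catC perm_cat2l perm_sym //.
have Hsz : size W + size O = pu t.
  by rewrite -size_cat (perm_size Hp) size_iota.
split => //.
  by rewrite perm_catCA catA cat_take_drop.
rewrite size_cat Hs size_takel //; lia.
Qed.

Lemma uniq_wo t : uniq (wk t ++ out t).
Proof. by case: (run_inv t) => _ /perm_uniq -> _; exact: iota_uniq. Qed.

Lemma mem_wo t e : (e \in wk t ++ out t) = (0 < e <= pu t).
Proof. by case: (run_inv t) => _ /perm_mem -> _; rewrite mem_iota add1n ltnS. Qed.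

Lemma size_wk t : size (wk t) = pu t - po t.
Proof.
case: (run_inv t) => _ /perm_size H Hs; rewrite size_cat size_iota in H.
by rewrite -H -Hs addnK.
Qed.

Lemma wk_final : wk (size s) = [::].
Proof.
apply/eqP; rewrite -size_eq0 size_wk pu_size // po_size //.
by case: wf => _ [_ ->]; rewrite subnn.
Qed.

Lemma rho_perm : perm_eq rho (iota 1 N).
Proof.
case: (run_inv (size s)) => _; rewrite wk_final pu_size // /rho.
Qed.

Lemma uniq_rho : uniq rho.
Proof. by rewrite (perm_uniq rho_perm) iota_uniq. Qed.

Lemma mem_rho e : (e \in rho) = (0 < e <= N).
Proof. by rewrite (perm_mem rho_perm) mem_iota add1n ltnS. Qed.


Lemma wk_S t : wk t.+1 = match o t with
  Push a => iota (pu t).+1 a ++ wk t | Pop b => drop b (wk t) end.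
Proof.
have HN := pu_leN t.+1; rewrite pu_S in HN.
case: (run_inv t) => Hi _ _.
move: Hi HN; rewrite /wk /inp st_S; case: (st t) => [[I W] O] /= ->.
by case: (o t) => [a|b] //= HN; rewrite take_drop_iota.
Qed.

Lemma out_S t : out t.+1 = match o t with
  Push a => out t | Pop b => take b (wk t) ++ out t end.
Proof.
rewrite /wk /out st_S; case: (st t) => [[I W] O] /=.
by case: (o t).
Qed.

Lemma inp_S t : inp t.+1 = match o t with
  Push a => drop a (inp t) | Pop b => inp t end.
Proof.
rewrite /inp st_S; case: (st t) => [[I W] O] /=.
by case: (o t).
Qed.

Lemma out_suffix t t' : t <= t' -> exists pre, out t' = pre ++ out t.
Proof.
elim: t' => [|t' IH]; first by rewrite leqn0 => /eqP->; exists [::].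
rewrite leq_eqVlt => /orP[/eqP->|h]; first by exists [::].
have [pre Hp] := IH h.
rewrite out_S; case: (o t') => [a|b]; first by exists pre.
by exists (take b (wk t') ++ pre); rewrite Hp catA.
Qed.

Lemma rho_split t : t <= size s -> exists pre, rho = pre ++ out t.
Proof. exact: out_suffix. Qed.

Lemma pop_source t e : e \in out t ->
  exists k b, [/\ k < t, k < size s, o k = Pop b & e \in take b (wk k)].
Proof.
elim: t => [|t IH]; first by rewrite /out /st take0.
rewrite out_S; case Ho: (o t) => [a|b].
  by case/IH => k [b [h1 h2 h3 h4]]; exists k, b; split => //; exact: ltnW.
rewrite mem_cat => /orP[h|]; last first.
  by case/IH => k [b' [h1 h2 h3 h4]]; exists k, b'; split => //; exact: ltnW.
exists t, b; split => //.
by case: ltnP Ho => // hs; rewrite nth_default.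
Qed.

Lemma wk_range t e : e \in wk t -> 0 < e <= pu t.
Proof. by move=> h; rewrite -mem_wo mem_cat h. Qed.

Lemma uniq_wk t : uniq (wk t).
Proof. by have := uniq_wo t; rewrite cat_uniq => /andP[]. Qed.

Lemma wk_out_disj t e : e \in wk t -> e \notin out t.
Proof.
by have := uniq_wo t; rewrite cat_uniq => /and3P[_ /hasPn H _] h; apply/negP => /H; rewrite h.
Qed.

Definition sb y z := all (fun j => ~~ ((minn y z <= pu j) && (pu j < maxn y z)))
  (iota 0 (size s).+1).

Lemma sbC y z : sb y z = sb z y.
Proof. by rewrite /sb minnC maxnC. Qed.

Lemma sb_new t y z : pu t < y -> pu t < z -> y <= pu t.+1 -> z <= pu t.+1 -> sb y z.
Proof.
move=> h1 h2 h3 h4; apply/allP => j _.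
case: (leqP j t) => hj.
  have := pu_mono hj; apply: contraL => /andP[h5 _].
  rewrite -ltnNge (leq_trans _ h5) //; rewrite leq_min; apply/andP; split => //.
have := pu_mono hj; apply: contraL => /andP[_ h5].
rewrite -ltnNge (leq_trans h5) //; rewrite geq_max; apply/andP; split => //.
Qed.

Lemma sb_sep t y z : t <= size s -> y <= pu t < z -> ~~ sb y z.
Proof.
move=> ht /andP[h1 h2]; apply/allPn; exists t; first by rewrite mem_iota.
rewrite negbK; apply/andP; split.
  by rewrite geq_min h1.
by rewrite leq_max h2 orbT.
Qed.

Lemma index_iota_mem m a y : m <= y < m + a -> index y (iota m a) = y - m.
Proof.
move=> /andP[h1 h2].
have hi : y - m < a by lia.
have -> : y = nth 0 (iota m a) (y - m) by rewrite nth_iota //; lia.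
rewrite index_uniq ?iota_uniq ?size_iota // nth_iota //; lia.
Qed.


Lemma index_drop_uniq (W : seq nat) b y : uniq W -> y \in drop b W ->
  index y W = b + index y (drop b W).
Proof.
move=> hu hy.
have hb : b <= size W.
  by case: (leqP b (size W)) => // h; move: hy; rewrite drop_oversize ?(ltnW h).
have hn : y \notin take b W.
  move: hu; rewrite -{1}(cat_take_drop b W) cat_uniq => /and3P[_ /hasPn H _].
  by have := H _ hy.
by rewrite -{1}(cat_take_drop b W) index_cat (negbTE hn) size_takel.
Qed.

Lemma push_lt_size t a : o t = Push a -> 0 < a -> t < size s.
Proof. by case: (ltnP t (size s)) => // h; rewrite nth_default // => -[<-]. Qed.

Lemma stack_order t y z : y \in wk t -> z \in wk t -> y != z ->
  (index y (wk t) < index z (wk t)) = ((y < z) == sb y z).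
Proof.
elim: t y z => [|t IH] y z; first by rewrite /wk /st take0.
have hpS := pu_S t.
rewrite wk_S; case Ho: (o t) => [a|b]; last first.
  move=> hy hz hyz.
  have := IH y z (mem_drop hy) (mem_drop hz) hyz.
  by rewrite (index_drop_uniq (uniq_wk t) hy) (index_drop_uniq (uniq_wk t) hz) ltn_add2l.
rewrite Ho /= in hpS.
rewrite !mem_cat !index_cat size_iota !mem_iota.
case hyA: (_ <= y < _); case hzA: (_ <= z < _) => /= hy hz hyz.
- rewrite !index_iota_mem ?mem_iota ?hyA ?hzA //.
  rewrite (@sb_new t) ?hpS //; try lia.
- have ha : 0 < a by lia.
  have hz' := wk_range hz.
  rewrite index_iota_mem ?hyA // sbC (negbTE (@sb_sep t z y _ _)); last first.
    by apply/andP; split; lia.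
    by apply: ltnW; apply: push_lt_size Ho ha.
  have -> : (y < z) = false by apply/negbTE; rewrite -leqNgt; lia.
  rewrite /=; lia.
- have ha : 0 < a by lia.
  have hy' := wk_range hy.
  rewrite index_iota_mem ?hzA // (negbTE (@sb_sep t y z _ _)); last first.
    by apply/andP; split; lia.
    by apply: ltnW; apply: push_lt_size Ho ha.
  have -> : (y < z) = true by lia.
  rewrite /=; apply/negbTE; rewrite -leqNgt; lia.
- by rewrite ltn_add2l IH.
Qed.


Lemma rho_at k b : k < size s -> o k = Pop b ->
  exists pre, rho = pre ++ take b (wk k) ++ out k.
Proof.
move=> hk ho; have [pre ->] := rho_split hk.
by exists pre; rewrite out_S ho.
Qed.

Lemma index_seg (pre C O : seq nat) x : uniq (pre ++ C ++ O) -> x \in C ->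
  index x (pre ++ C ++ O) = size pre + index x C.
Proof.
move=> hu hx.
have hn : x \notin pre.
  move: hu; rewrite cat_uniq => /and3P[_ /hasPn H _].
  by apply/negP => hp; have := H x; rewrite mem_cat hx /= => /(_ isT); rewrite hp.
by rewrite index_cat (negbTE hn) index_cat hx.
Qed.

Lemma drop_seg (pre C O : seq nat) x : uniq (pre ++ C ++ O) -> x \in C ->
  drop (index x (pre ++ C ++ O)) (pre ++ C ++ O) = drop (index x C) C ++ O.
Proof.
move=> hu hx; rewrite index_seg // drop_cat ltnNge leq_addr /= addKn drop_cat.
by rewrite index_mem hx.
Qed.

Lemma pu_pop t b : o t = Pop b -> pu t.+1 = pu t.
Proof. by move=> h; rewrite pu_S h addn0. Qed.

Lemma lastpush k : 0 < pu k -> exists t0, [/\ t0 < k, is_push (o t0), pu k = pu t0.+1 &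
  forall t, t0 < t < k -> is_pop (o t)].
Proof.
elim: k => [|k IH]; first by rewrite pu0.
case Ho: (o k) => [a|b] hp.
  exists k; split => //; first by rewrite Ho.
  by move=> t /andP[h1 h2]; have := leq_trans h1 h2; rewrite ltnn.
rewrite (pu_pop Ho) in hp *.
have [t0 [h1 h2 h3 h4]] := IH hp.
exists t0; split => //; first exact: ltnW.
move=> t /andP[ht1 ht2]; case: (ltngtP t k) ht2 => //.
- by move=> hlt _; apply: h4; rewrite ht1.
- by move=> hkt; rewrite ltnS leqNgt hkt.
- by move=> -> _; rewrite Ho.
Qed.

Lemma pop_crit k b x u : k < size s -> o k = Pop b -> x \in take b (wk k) ->
  u \in wk k -> u != x ->
  (u \in take b (wk k)) = ((index u (wk k) < index x (wk k)) == (index u rho < index x rho)).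
Proof.
move=> hk ho hx hu hux.
have [pre hr] := rho_at hk ho.
have hur := uniq_rho; rewrite hr in hur *.
have hw : wk k = take b (wk k) ++ drop b (wk k) by rewrite cat_take_drop.
have notpre e : e \in take b (wk k) -> e \notin pre.
  move: hur; rewrite cat_uniq => /and3P[_ /hasPn H _] he.
  by apply/negP => hp; have := H e; rewrite mem_cat he /= => /(_ isT); rewrite hp.
rewrite [in index u (wk k)]hw [in index x (wk k)]hw !index_cat hx (negbTE (notpre _ hx)).
case hC: (u \in take b (wk k)).
  by rewrite (negbTE (notpre _ hC)) ltn_add2l eqxx.
have hpre : u \in pre.
  have : u \in pre ++ take b (wk k) ++ out k.
    rewrite -hr mem_rho; case/andP: (wk_range hu) => h1 h2.
    by rewrite h1 /= (leq_trans h2 (pu_leN k)).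
  by rewrite !mem_cat hC (negbTE (wk_out_disj hu)) /= orbF.
rewrite hpre.
have h1 : index u pre < size pre by rewrite index_mem.
have h2 : index x (take b (wk k)) < size (take b (wk k)) by rewrite index_mem.
have -> : (size (take b (wk k)) + index u (drop b (wk k)) < index x (take b (wk k))) = false.
  by apply/negbTE; rewrite -leqNgt; lia.
have -> : (index u pre < size pre + index x (take b (wk k))) = true by lia.
by [].
Qed.


Hypothesis red : reduced s.

Lemma pop_pu k b x : k < size s -> o k = Pop b -> x \in take b (wk k) ->
  (forall e, e \in drop (index x rho) rho -> e <= pu k) /\
  pu k \in drop (index x rho) rho.
Proof.
move=> hk ho hx.
have [pre hr] := rho_at hk ho.
have hur := uniq_rho; rewrite hr in hur.
rewrite hr (drop_seg hur hx); split.
  move=> e he.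
  have : e \in out k.+1.
    rewrite out_S ho mem_cat; move: he; rewrite mem_cat => /orP[/mem_drop ->|->] //.
    by rewrite orbT.
  have : e \in wk k.+1 ++ out k.+1 -> e <= pu k.+1.
    by rewrite mem_wo => /andP[].
  by rewrite (pu_pop ho) mem_cat => H1 H2; apply: H1; rewrite H2 orbT.
have hxw : x \in wk k := mem_take hx.
have hp : 0 < pu k by case/andP: (wk_range hxw) => h1 h2; exact: leq_trans h1 h2.
have [t0 [h1 h2 h3 h4]] := lastpush hp.
have hpop : is_pop (o t0.+1).
  case: (ltngtP t0.+1 k) => [hlt|hgt|->]; first by apply: h4; rewrite ltnSn hlt.
    by move: hgt; rewrite ltnS leqNgt h1.
  by rewrite ho.
have hsz : t0.+1 < size s by exact: leq_ltn_trans h1 hk.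
have [e1 e2] := red hsz h2 hpop.
have hmk : pu k = (pu t0).+1 by rewrite h3 pu_S e1 addn1.
have hw1 : wk t0.+1 = pu k :: wk t0 by rewrite wk_S e1 hmk.
have ho2 : out t0.+2 = pu k :: out t0.+1.
  by rewrite out_S e2 hw1 /= take0.
case: (ltngtP t0.+1 k) => [hlt|hgt|heq].
- have [pre' hpre'] := out_suffix hlt.
  by rewrite hpre' ho2 !mem_cat mem_head !orbT.
- by move: hgt; rewrite ltnS leqNgt h1.
- subst k.
  have hb : b = 1 by move: ho; rewrite e2 => -[].
  subst b; rewrite hw1 /= take0 mem_seq1 in hx.
  rewrite hw1 /= take0 -(eqP hx) /= eqxx /=.
  by rewrite mem_head.
Qed.

End Run.

Arguments wk_range {s} _ {t e}.
Arguments mem_wo {s} _ t e.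
Arguments rho_at {s k b}.
Arguments uniq_rho {s}.

Lemma sb_block s j p a x u : j < size s -> pu s j = p -> pu s j.+1 = p + a ->
  p < x <= p + a -> u != x -> sb s u x = (p < u <= p + a).
Proof.
move=> hj h1 h2 hx hux.
case hu: (p < u <= p + a).
  apply/allP => t _; case: (leqP t j) => ht.
    have := pu_mono s ht; rewrite h1 => hle.
    apply/negP => /andP[hm _]; move: hm; rewrite geq_min => /orP[] hm; lia.
  have := pu_mono s ht; rewrite h2 => hle.
  apply/negP => /andP[_ hm]; move: hm; rewrite leq_max => /orP[] hm; lia.
apply/negbTE; case: (leqP u p) => hup.
  apply: (@sb_sep s j); first exact: ltnW.
  by rewrite h1 hup /=; lia.
have hua : p + a < u by lia.
rewrite sbC; apply: (@sb_sep s j.+1) => //.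
by rewrite h2; apply/andP; split; lia.
Qed.

Lemma index_lt_out (pre C O : seq nat) x u : uniq (pre ++ C ++ O) -> x \in C -> u \in O ->
  index x (pre ++ C ++ O) < index u (pre ++ C ++ O).
Proof.
move=> hu hx hO; rewrite index_seg //.
have hn : u \notin pre ++ C.
  move: hu; rewrite catA cat_uniq => /and3P[_ /hasPn H _].
  by apply/negP => hp; have := H u hO; rewrite hp.
have hup : u \notin pre by move: hn; rewrite mem_cat negb_or => /andP[].
have huc : u \notin C by move: hn; rewrite mem_cat negb_or => /andP[].
rewrite index_cat (negbTE hup) index_cat (negbTE huc).
have : index x C < size C by rewrite index_mem.
move=> h; by rewrite ltn_add2l (leq_trans h) // leq_addr.
Qed.

Lemma pu_pop_eq s1 s2 k1 b1 k2 b2 x :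
  well_formed s1 -> reduced s1 -> well_formed s2 -> reduced s2 -> rho s1 = rho s2 ->
  k1 < size s1 -> nth (Push 0) s1 k1 = Pop b1 -> x \in take b1 (wk s1 k1) ->
  k2 < size s2 -> nth (Push 0) s2 k2 = Pop b2 -> x \in take b2 (wk s2 k2) ->
  pu s1 k1 <= pu s2 k2.
Proof.
move=> wf1 rd1 wf2 rd2 hr hk1 ho1 hx1 hk2 ho2 hx2.
have [_ H1] := pop_pu wf1 rd1 hk1 ho1 hx1.
have [H2 _] := pop_pu wf2 rd2 hk2 ho2 hx2.
by apply: H2; rewrite -hr.
Qed.

Lemma dir s1 s2 j1 j2 p a x k1 b1 k2 b2 u :
  well_formed s1 -> reduced s1 -> well_formed s2 -> reduced s2 -> rho s1 = rho s2 ->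
  j1 < size s1 -> pu s1 j1 = p -> pu s1 j1.+1 = p + a ->
  j2 < size s2 -> pu s2 j2 = p -> pu s2 j2.+1 = p + a ->
  p < x <= p + a ->
  k1 < size s1 -> nth (Push 0) s1 k1 = Pop b1 -> x \in take b1 (wk s1 k1) ->
  k2 < size s2 -> nth (Push 0) s2 k2 = Pop b2 -> x \in take b2 (wk s2 k2) ->
  u \in take b1 (wk s1 k1) -> u \in take b2 (wk s2 k2).
Proof.
move=> wf1 rd1 wf2 rd2 hr hj1 hp1 hq1 hj2 hp2 hq2 hx hk1 ho1 hx1 hk2 ho2 hx2 hu1.
case: (eqVneq u x) => [->//|hux].
have hM : pu s1 k1 = pu s2 k2.
  apply/eqP; rewrite eqn_leq (pu_pop_eq wf1 rd1 wf2 rd2 hr hk1 ho1 hx1 hk2 ho2 hx2).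
  by rewrite (pu_pop_eq wf2 rd2 wf1 rd1 (esym hr) hk2 ho2 hx2 hk1 ho1 hx1).
have hu1w : u \in wk s1 k1 := mem_take hu1.
have hx1w : x \in wk s1 k1 := mem_take hx1.
have hx2w : x \in wk s2 k2 := mem_take hx2.
have hsb1 := sb_block hj1 hp1 hq1 hx hux.
have hsb2 := sb_block hj2 hp2 hq2 hx hux.
have hc1 := pop_crit wf1 hk1 ho1 hx1 hu1w hux.
rewrite hu1 in hc1.
have hso1 := stack_order wf1 hu1w hx1w hux.
rewrite hsb1 in hso1.
have hu2w : u \in wk s2 k2.
  have : u \in wk s2 k2 ++ out s2 k2.
    rewrite (mem_wo wf2) -hM; exact: (wk_range wf1 hu1w).
  rewrite mem_cat => /orP[//|hout].
  exfalso.
  have [k3 [b3 [h31 h32 h33 h34]]] := pop_source hout.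
  have hxu : index x (rho s2) < index u (rho s2).
    have [pre hpre] := rho_at hk2 ho2.
    have hur := uniq_rho wf2; rewrite hpre in hur *.
    exact: index_lt_out.
  have hsa1 : (index u (wk s1 k1) < index x (wk s1 k1)) = false.
    move: hc1; rewrite hr.
    have -> : (index u (rho s2) < index x (rho s2)) = false by apply/negbTE; rewrite -leqNgt ltnW.
    by case: (_ < _).
  have hx3w : x \in wk s2 k3.
    have : x \in wk s2 k3 ++ out s2 k3.
      rewrite (mem_wo wf2); case/andP: (wk_range wf1 hx1w) => -> hxle /=.
      apply: (leq_trans hxle).
      have [_ H1] := pop_pu wf1 rd1 hk1 ho1 hu1.
      have [H2 _] := pop_pu wf2 rd2 h32 h33 h34.
      by apply: H2; rewrite -hr.
    rewrite mem_cat => /orP[//|hxo].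
    have [pre hpre] := out_suffix s2 (ltnW h31).
    have := wk_out_disj wf2 hx2w; rewrite hpre mem_cat hxo orbT //.
  have hx3c : x \notin take b3 (wk s2 k3).
    apply/negP => hxc.
    have [pre hpre] := out_suffix s2 h31.
    have := wk_out_disj wf2 hx2w; rewrite hpre mem_cat out_S h33 mem_cat hxc !orbT //.
  have hxu' : x != u by rewrite eq_sym.
  have hc3 := pop_crit wf2 h32 h33 h34 hx3w hxu'.
  rewrite (negbTE hx3c) hxu in hc3.
  have hso3 := stack_order wf2 hx3w (mem_take h34) hxu'.
  rewrite sbC hsb2 in hso3.
  have hsa3 : (index x (wk s2 k3) < index u (wk s2 k3)) = false.
    by move: hc3; case: (_ < _).
  rewrite hsa3 in hso3; rewrite hsa1 in hso1.
  move: hso1 hso3 hux; case: (ltngtP u x) => //; case: (p < u <= p + a) => //.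
have hc2 := pop_crit wf2 hk2 ho2 hx2 hu2w hux.
have hso2 := stack_order wf2 hu2w hx2w hux.
rewrite hsb2 in hso2.
by rewrite hc2 hso2 -hso1 -hr.
Qed.


Definition V (p q : nat) : int * int := (Posz (p + q), (Posz p - Posz q)%R).

Lemma fold_v (l : seq op) p q :
  foldl vstep (V p q) l = V (p + total_push l) (q + total_pop l).
Proof.
elim: l p q => [|o l IH] p q /=; first by rewrite !addn0.
have -> : vstep (V p q) o = V (p + push_size o) (q + pop_size o).
  rewrite /V /vstep; case: o => [a|b] /=; congr pair; lia.
by rewrite IH /total_push /total_pop /= !addnA.
Qed.

Lemma vert_nth (s : seq op) j : j <= size s ->
  nth (0%R, 0%R) (vertices s) j = V (pu s j) (po s j).
Proof.
case: j => [|j] hj /=; first by rewrite pu0 po0.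
rewrite nth_scanl // -[(0%R, 0%R)]/(V 0 0) fold_v.
by rewrite /pu /po.
Qed.

Lemma edgeE (s : seq op) j : j < size s ->
  edge s j = (V (pu s j) (po s j), V (pu s j.+1) (po s j.+1)).
Proof. by move=> hj; rewrite /edge !vert_nth // ltnW. Qed.

Lemma V_inj p q p' q' : V p q = V p' q' -> p = p' /\ q = q'.
Proof. by rewrite /V => -[h1 h2]; split; lia. Qed.

Lemma states_nth (s : seq op) i : i <= size s ->
  nth (init_state s) (states s) i = st s i.
Proof.
case: i => [|i] hi /=; first by rewrite /st take0.
by rewrite nth_scanl.
Qed.

Lemma support_eq (s : seq op) i : i <= size s ->
  Defs.support s i = match nth (Push 0) s i with
    Push a => take a (inp s i) | Pop b => take b (wk s i) end.
Proof.
move=> hi; rewrite /Defs.support states_nth // /inp /wk.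
by case: (st s i) => [[I W] O].
Qed.

Lemma rho_produced (s : seq op) : rho s = produced s.
Proof. by rewrite /rho /out /st take_size. Qed.

Lemma out_filter (pre C O : seq nat) x : uniq (pre ++ C ++ O) -> x \in C ->
  O = [seq e <- pre ++ C ++ O | (index x (pre ++ C ++ O) < index e (pre ++ C ++ O))
                                 && (e \notin C)].
Proof.
move=> hu hx.
have hix := index_seg hu hx.
have hxc : index x C < size C by rewrite index_mem.
rewrite !filter_cat.
have -> : [seq e <- pre | (index x (pre ++ C ++ O) < index e (pre ++ C ++ O)) && (e \notin C)] = [::].
  rewrite -(filter_pred0 pre); apply: eq_in_filter => e he /=.
  rewrite hix (@index_cat _ e) he.
  have : index e pre < size pre by rewrite index_mem.
  move=> h; apply/negbTE; rewrite negb_and -leqNgt; apply/orP; left.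
  exact: leq_trans (ltnW h) (leq_addr _ _).
have -> : [seq e <- C | (index x (pre ++ C ++ O) < index e (pre ++ C ++ O)) && (e \notin C)] = [::].
  rewrite -(filter_pred0 C); apply: eq_in_filter => e he /=.
  by rewrite he andbF.
rewrite -{1}(filter_predT O) /=; apply: eq_in_filter => e he /=.
have := index_lt_out hu hx he; rewrite hix => -> /=.
have hn : e \notin pre ++ C.
  move: hu; rewrite catA cat_uniq => /and3P[_ /hasPn H _].
  by apply/negP => hp; have := H e he; rewrite hp.
by move: hn; rewrite mem_cat negb_or => /andP[_ ->].
Qed.

Lemma size_pop (s : seq op) k b : well_formed s -> nth (Push 0) s k = Pop b ->
  size (take b (wk s k)) = b.
Proof.
move=> wf ho; rewrite size_takel // size_wk //.
have := po_le_pu wf k.+1; rewrite pu_S po_S ho /=; lia.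
Qed.


Theorem mainTheorem11 (s : seq op) (i k : nat) :
  well_formed s -> reduced s ->
  i < size s -> k < size s ->
  is_push (nth (Push 0) s i) -> is_pop (nth (Push 0) s k) ->
  correspond s i k ->
  fixed s i -> fixed s k.
Proof.
move=> wf rd hi hk hpush hpop [x [hxi hxk]] hfix t rdt heq.
have [_ [wft [hN hprod]]] := heq.
have hr : rho s = rho t by rewrite !rho_produced.
case Hoi: (nth (Push 0) s i) hpush => [a|//] _.
case Hok: (nth (Push 0) s k) hpop => [//|b] _.
rewrite (support_eq (ltnW hi)) Hoi in hxi.
rewrite (support_eq (ltnW hk)) Hok in hxk.
have [j0 [hj0 he]] := hfix t rdt heq.
rewrite !edgeE // in he.
have [hp1 _] := V_inj (f_equal fst he).
have [hq1 _] := V_inj (f_equal snd he).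
have hq : pu s i.+1 = pu s i + a by rewrite pu_S Hoi.
have hx : pu s i < x <= pu s i + a.
  have hin : inp s i = drop (pu s i) (iota 1 (N s)) by case: (@run_inv s wf i).
  have hle : pu s i + a <= N s by rewrite -hq pu_leN.
  move: hxi; rewrite hin take_drop_iota // mem_iota => /andP[h1 h2].
  by rewrite h1 /= -ltnS -addSn.
have [pre1 h1] := rho_at hk Hok.
have hxt : x \in out t (size t).
  by rewrite -/(rho t) -hr h1 !mem_cat hxk orbT.
have [k2 [b2 [h21 h22 h23 h24]]] := pop_source hxt.
have hq2 : pu t j0.+1 = pu s i + a by rewrite hq1 hq.
have hCC : take b (wk s k) =i take b2 (wk t k2).
  move=> u; apply/idP/idP => hu.
    exact: (dir wf rd wft rdt hr hi (erefl _) hq hj0 hp1 hq2 hx hk Hok hxk h22 h23 h24 hu).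
  exact: (dir wft rdt wf rd (esym hr) hj0 hp1 hq2 hi (erefl _) hq hx h22 h23 h24 hk Hok hxk hu).
have hb : b = b2.
  rewrite -(size_pop wf Hok) -(size_pop wft h23); apply: perm_size.
  by apply: uniq_perm => //; apply: take_uniq; apply: uniq_wk.
have hM : pu s k = pu t k2.
  apply/eqP; rewrite eqn_leq (pu_pop_eq wf rd wft rdt hr hk Hok hxk h22 h23 h24).
  by rewrite (pu_pop_eq wft rdt wf rd (esym hr) h22 h23 h24 hk Hok hxk).
have hO : out s k = out t k2.
  have [pre2 h2] := rho_at h22 h23.
  have u1 := uniq_rho wf; rewrite h1 in u1.
  have u2 := uniq_rho wft; rewrite h2 in u2.
  rewrite (out_filter u1 hxk) (out_filter u2 h24) -h1 -h2 hr.
  by apply: eq_filter => e; rewrite hCC.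
have hP : po s k = po t k2.
  by case: (@run_inv s wf k) => _ _ <-; case: (@run_inv t wft k2) => _ _ <-; rewrite hO.
exists k2; split => //.
rewrite !edgeE // (pu_pop Hok) (pu_pop h23) !po_S Hok h23 /= hM hP hb.
done.
Qed.
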